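(* Let $X$ be a compact metric space and $F\colon X\to 2^X$ a set-valued mapping such that the set of points of $X$ having at least one periodic orbit is dense in $X$. Then there exists an $F$-invariant Borel probability measure with full support; consequently the set of $F$-invariant measures with full support is a dense $G_\delta$ subset of the space of $F$-invariant Borel probability measures on $X$ (with the weak$^*$ topology).
   Context: $2^X$ is the space of nonempty closed subsets of $X$; a set-valued mapping is an upper semicontinuous $F\colon X\to 2^X$; $F^{-1}(B)=\{y\in X: F(y)\cap B\neq\emptyset\}$. An orbit of $x$ is a sequence $(x_j)_{j=0}^\infty$ with $x_0=x$, $x_{j+1}\in F(x_j)$; it is periodic if there is $p\in\mathbb{N}$ with $x_{j+p}=x_j$ for all $j\ge0$. A Borel probability measure $\mu$ on $X$ is $F$-invariant if $\mu(B)\le\mu(F^{-1}(B))$ for every Borel set $B$; it has full support if $\mu(U)>0$ for every nonempty open $U$. *)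

(* Defs.v *)
From HB Require Import structures.
From mathcomp Require Import all_boot all_order all_algebra.
From mathcomp Require Import all_classical all_reals all_analysis.
Set Implicit Arguments. Unset Strict Implicit. Unset Printing Implicit Defensive.
Import Order.TTheory GRing.Theory Num.Theory.
Import numFieldNormedType.Exports.
Local Open Scope classical_set_scope.
Local Open Scope ring_scope.

Notation BorelOf X := (g_sigma_algebraType (@open X)).

Section SetValued.
Context {X : topologicalType}.

Definition usc (F : X -> set X) : Prop :=
  forall U : set X, open U -> open [set x | F x `<=` U].

Definition set_valued_map (F : X -> set X) : Prop :=
  (forall x, F x !=set0 /\ closed (F x)) /\ usc F.

Definition preimF (F : X -> set X) (B : set X) : set X :=
  [set y | F y `&` B !=set0].

Definition is_orbit (F : X -> set X) (x : X) (s : nat -> X) : Prop :=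
  s 0%N = x /\ forall j, F (s j) (s j.+1).

Definition is_periodic (s : nat -> X) : Prop :=
  exists p : nat, (0 < p)%N /\ forall j, s (j + p)%N = s j.

Definition has_periodic_orbit (F : X -> set X) (x : X) : Prop :=
  exists s, is_orbit F x s /\ is_periodic s.

End SetValued.

Definition outer_of {d} {T : measurableType d} {R : realType}
  (mu : set T -> \bar R) (A : set T) : \bar R :=
  ereal_inf [set mu B | B in [set B : set T | measurable B /\ A `<=` B]].

Section Measures.
Context {R : realType} {X : ptopologicalType}.
Local Notation T := (BorelOf X).

(** mu(B) <= mu(F^{-1}(B)) for every Borel B (outer measure on the right,
    since F^{-1}(B) need not be Borel; it is universally measurable). *)
Definition F_invariant (F : X -> set X) (mu : probability T R) : Prop :=
  forall B : set T, measurable B -> (mu B <= outer_of mu (preimF F B))%E.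

Definition full_support (mu : probability T R) : Prop :=
  forall U : set X, open U -> U !=set0 -> (0 < mu U)%E.

(** Open sets of the weak* topology on Borel probability measures:
    generated by mu |-> \int f dmu, f : X -> R continuous. *)
Definition weak_open (W : set (probability T R)) : Prop :=
  forall mu, W mu ->
    exists (n : nat) (f : nat -> X -> R) (eps : R),
      (forall i, continuous (f i)) /\ 0 < eps /\
      (forall nu : probability T R,
         (forall i, (i < n)%N ->
            (`| \int[nu]_x (f i x)%:E - \int[mu]_x (f i x)%:E | < eps%:E)%E) ->
         W nu).

Definition weak_dense_in (P S : set (probability T R)) : Prop :=
  forall mu, P mu -> forall W, weak_open W -> W mu -> exists nu, S nu /\ W nu.

Definition weak_Gdelta_in (P S : set (probability T R)) : Prop :=
  exists Ws : nat -> set (probability T R),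
    (forall n, weak_open (Ws n)) /\ S = P `&` \bigcap_n Ws n.

End Measures.

(* Main.v *)
Require Import Defs.
From HB Require Import structures.
From mathcomp Require Import all_boot all_order all_algebra.
From mathcomp Require Import all_classical all_reals all_analysis.
From mathcomp Require Import measurable_realfun finmap.
From mathcomp Require Import ring lra.
Import Order.TTheory GRing.Theory Num.Theory.
Import numFieldNormedType.Exports.
Local Open Scope classical_set_scope.
Local Open Scope ring_scope.

Section pwrap.
Context d (T : measurableType d) (R : realType) (m : {measure set T -> \bar R}).
Definition pwrap (_ : m setT = 1%E) (A : set T) := m A.
Variable h : m setT = 1%E.
Let pw0 : pwrap h set0 = 0%E. Proof. exact: measure0. Qed.
Let pwge0 A : (0 <= pwrap h A)%E. Proof. exact: measure_ge0. Qed.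
Let pwsa : semi_sigma_additive (pwrap h). Proof. exact: measure_semi_sigma_additive. Qed.
HB.instance Definition _ := isMeasure.Build _ _ _ (pwrap h) pw0 pwge0 pwsa.
HB.instance Definition _ := Measure_isProbability.Build _ _ _ (pwrap h) h.
End pwrap.
Arguments pwrap {d T R m}.

Section S.
Context {R : realType} {d} {T : measurableType d}.
Definition cycm (s : nat -> T) (p : nat) :=
  msum (fun j => mscale ((p%:R : R)^-1)%:nng (@dirac _ T (s j) R)) p.
Definition serm (mu : nat -> probability T R) :=
  mseries (fun k => mscale (((2:R)^-1) ^+ k.+1)%:nng (mu k)) 0.
Local Open Scope ereal_scope.
Lemma cycm_setT s p : (0 < p)%N -> cycm s p setT = 1.
Proof.
move=> p0; rewrite /cycm /msum /mscale /=.
rewrite (eq_bigr (fun=> (p%:R^-1)%:E)); last first.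
  by move=> k _; rewrite /mscale /= diracT mule1.
rewrite sumEFin sumr_const card_ord; congr (_%:E).
have pn : (p%:R : R) != 0%R by rewrite pnatr_eq0 -lt0n.
by rewrite -(mulr_natr (p%:R^-1)) mulVf.
Qed.
Lemma geo_half : (\sum_(0 <= k <oo) (((2:R)^-1) ^+ k.+1)%:E) = 1.
Proof.
have h := @cvg_geometric_series_half R 1 0.
have e : (fun k => (1 / (2 ^ (k + 1))%N%:R)%R : R) = (fun k => ((2:R)^-1) ^+ k.+1)%R.
  by apply/funext => k; rewrite div1r natrX exprVn addn1.
rewrite e expr0 divr1 in h.
apply/cvg_lim => //.
rewrite (_ : (fun n => _) = EFin \o series (fun k => ((2:R)^-1) ^+ k.+1)%R).
  by apply: cvg_EFin; [exact: nearW | exact: h].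
by apply/funext => n; rewrite /series /= sumEFin.
Qed.

Lemma serm_setT (mu : nat -> probability T R) : serm mu setT = 1.
Proof.
rewrite /serm /mseries /= -geo_half; apply: eq_eseriesr => k _.
by rewrite /mscale /= probability_setT mule1.
Qed.
Definition mixm (t : R) (t0 : (0 <= t)%R) (t1 : (0 <= 1 - t)%R) (mu nu : probability T R) :=
  measure_add (mscale (NngNum t1) mu) (mscale (NngNum t0) nu).

Lemma mixmE t t0 t1 mu nu A : @mixm t t0 t1 mu nu A = (1 - t)%:E * mu A + t%:E * nu A.
Proof. by rewrite /mixm measure_addE. Qed.

Lemma cycm_pos s p (A : set T) : (0 < p)%N -> A (s 0%N) -> 0 < cycm s p A.
Proof.
case: p => [//|q] _ As0; rewrite /cycm /msum /= big_ord_recl /=.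
apply: (@lt_le_trans _ _ (mscale (((q.+1%:R : R)^-1)%:nng)%R \d_(s 0%N) A)).
  rewrite /mscale /= diracE mem_set //= mul1e lte_fin invr_gt0 ltr0n //.
rewrite leeDl //; apply: sume_ge0 => i _; exact: measure_ge0.
Qed.

Lemma mixm_setT t t0 t1 mu nu : @mixm t t0 t1 mu nu setT = 1.
Proof. by rewrite mixmE !probability_setT !mule1 -EFinD subrK. Qed.
End S.

Section inv.
Context {R : realType} {X : pseudoPMetricType R}.
Local Notation T := (BorelOf X).
Variable F : X -> set X.
Local Open Scope ereal_scope.

Definition invP (mu : set T -> \bar R) :=
  forall B C : set T, measurable B -> measurable C -> preimF F B `<=` C -> mu B <= mu C.

Lemma invPE (mu : probability T R) : F_invariant F mu <-> invP mu.
Proof.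
split.
- move=> h B C mB mC BC; apply: (le_trans (h B mB)).
  by apply: ereal_inf_lbound; exists C.
- move=> h B mB; apply: le_ereal_inf_tmp => _ [C [mC BC] <-]; exact: h.
Qed.

Lemma cycm_inv (s : nat -> T) p : (forall j, s (j + p)%N = s j) ->
  (forall j, F (s j) (s j.+1)) -> invP (cycm s p).
Proof.
move=> per orb B C mB mC BC; rewrite /cycm /msum /=.
have sh : \sum_(j < p) mscale (((p%:R : R)^-1)%:nng)%R \d_(s j) B =
          \sum_(j < p) mscale (((p%:R : R)^-1)%:nng)%R \d_(s j.+1) B.
  case: p per => [|q] per; first by rewrite !big_ord0.
  rewrite big_ord_recl big_ord_recr /= addeC; congr (_ + _).
    by rewrite -(per 0%N) add0n.
rewrite sh; apply: lee_sum => j _; rewrite /mscale /=.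
apply: lee_wpmul2l; first by rewrite lee_fin.
rewrite !diracE; case: (boolP (s j.+1 \in B)) => /= hB; last by rewrite lee_fin.
have : C (s j).
  apply: BC; exists (s j.+1); split; first exact: orb.
  by move: hB; rewrite in_setE.
by rewrite -in_setE => ->.
Qed.
Lemma serm_inv (mu : nat -> probability T R) : (forall k, invP (mu k)) -> invP (serm mu).
Proof.
move=> h B C mB mC BC; rewrite /serm /mseries /=.
apply: lee_nneseries => [k _ _|k _]; first exact: measure_ge0.
rewrite /mscale /=; apply: lee_wpmul2l; first by rewrite lee_fin.
exact: h.
Qed.

Lemma mixm_inv t t0 t1 (mu nu : probability T R) : invP mu -> invP nu ->
  invP (@mixm _ _ _ t t0 t1 mu nu).
Proof.
move=> hm hn B C mB mC BC; rewrite !mixmE; apply: leeD.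
  by apply: lee_wpmul2l; [rewrite lee_fin | exact: hm].
by apply: lee_wpmul2l; [rewrite lee_fin | exact: hn].
Qed.

Lemma serm_pos (mu : nat -> probability T R) k (U : set T) : 
  measurable U -> 0 < mu k U -> 0 < serm mu U.
Proof.
move=> mU hk; rewrite /serm /mseries /=.
apply: (@lt_le_trans _ _ (mscale (((2:R)^-1 ^+ k.+1)%:nng)%R (mu k) U)).
  by rewrite /mscale /= mule_gt0 // lte_fin exprn_gt0.
apply: (le_trans _ (nneseries_lim_ge k.+1 _)); last by move=> n _ _; exact: measure_ge0.
rewrite big_nat_recr //= leeDr //; apply: sume_ge0 => n _; exact: measure_ge0.
Qed.
End inv.

Section integ.
Context {R : realType} {d} {T : measurableType d}.


Lemma bnd_of (f : T -> R) (M : R) (A : set T) : (forall x, (`|f x| <= M)%R) ->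
  [bounded f x | x in A].
Proof.
move=> hM; rewrite /bounded_near; exists M; split; first exact: num_real.
by move=> y /ltW My x _ /=; exact: le_trans (hM x) My.
Qed.
Local Open Scope ereal_scope.

Lemma integral_mscaleS (m : {measure set T -> \bar R}) (k : {nonneg R}) (f : T -> \bar R) :
  m.-integrable setT f -> \int[mscale k m]_x f x = k%:num%:E * \int[m]_x f x.
Proof.
move=> fi; have mf := measurable_int _ fi.
rewrite [LHS]integralE [X in _ = _ * X]integralE.
rewrite !ge0_integral_mscale //; last 2 first.
- exact: measurable_funeneg.
- exact: measurable_funepos.
rewrite [RHS]muleBr //; apply: fin_num_adde_defr; exact: integrable_pos_fin_num.
Qed.

Lemma bounded_int (m : {measure set T -> \bar R}) (f : T -> R) (M : R) :
  m setT < +oo -> measurable_fun setT f -> (forall x, (`|f x| <= M)%R) ->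
  m.-integrable setT (EFin \o f).
Proof.
move=> mT mf hM; apply: measurable_bounded_integrable => //; exact: bnd_of.
Qed.

Lemma prob_int_bound (mu : probability T R) (f : T -> R) (M : R) :
  measurable_fun setT f -> (forall x, (`|f x| <= M)%R) ->
  exists a : R, \int[mu]_x (f x)%:E = a%:E /\ (`|a| <= M)%R.
Proof.
move=> mf hM.
have fi : mu.-integrable setT (EFin \o f).
  apply: (@bounded_int mu f M) => //; apply: (le_lt_trans (probability_le1 mu measurableT)); exact: ltry.
exists (fine (\int[mu]_x (f x)%:E)); split.
  by rewrite fineK //; exact: integrable_fin_num fi.
rewrite -lee_fin -abse_EFin fineK; last exact: integrable_fin_num fi.
apply: (le_trans (le_abse_integral _ _ _)) => //.
  by apply/measurable_EFinP.
apply: (@le_trans _ _ (\int[mu]_x (cst M%:E) x)).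
  apply: ge0_le_integral => //.
  - by apply: measurableT_comp => //; apply/measurable_EFinP.
  - by move=> x _ /=; rewrite lee_fin.
have := integral_cst mu measurableT M%:E; rewrite /= => ->.
by rewrite probability_setT mule1.
Qed.
End integ.

Section pib.
Context {R : realType} {X : pseudoPMetricType R}.

Definition gf (c : X) (r : R) : X -> R :=
  fun x => 1 - @Urysohn X R [set c] (~` (ball c r)°) x.

Lemma gf_sep (c : X) (r : R) : 0 < r -> uniform_separator [set c] (~` (ball c r)°).
Proof.
move=> r0; apply: (@point_uniform_separator R).
  by apply: open_closedC; exact: open_interior.
by move=> /(_ (nbhsx_ballx c _ r0)).
Qed.

Lemma gf_cont c r : continuous (gf c r).
Proof.
move=> x; apply: continuousB; first exact: cvg_cst.
exact: Urysohn_continuous.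
Qed.

Lemma gf_range c r x : 0 <= gf c r x <= 1.
Proof.
have := @Urysohn_range X R [set c] (~` (ball c r)°) (Urysohn [set c] (~` (ball c r)°) x).
move=> /(_ (ex_intro2 _ _ x I erefl)); rewrite /= in_itv /= => /andP[h0 h1].
by rewrite /gf subr_ge0 h1 lerBlDr lerDl.
Qed.

Lemma gf_c c r : 0 < r -> gf c r c = 1.
Proof.
move=> r0; rewrite /gf (@Urysohn_sub0 X R _ _ (gf_sep c r r0) (Urysohn [set c] (~` (ball c r)°) c)) ?subr0 //.
by exists c.
Qed.

Lemma gf_out c r x : 0 < r -> ~ ball c r x -> gf c r x = 0.
Proof.
move=> r0 nb; rewrite /gf (@Urysohn_sub1 X R _ _ (gf_sep c r r0) (Urysohn [set c] (~` (ball c r)°) x)) ?subrr //.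
by exists x => // /interior_subset.
Qed.
Lemma pibase : compact [set: X] -> exists g : nat -> X -> R,
  [/\ forall k, continuous (g k), forall k x, 0 <= g k x <= 1,
      forall k, exists x, g k x = 1 &
      forall U : set X, open U -> U !=set0 -> exists k, forall x, ~ U x -> g k x = 0].
Proof.
move=> cX.
pose r n : R := (n.+1%:R)^-1.
have r0 n : 0 < r n by rewrite /r invr_gt0 ltr0n.
have hD : forall n, exists D : {fset X},
    [set: X] `<=` cover [set` D] (fun c => (ball c (r n))°).
  move=> n; move: cX; rewrite compact_cover => /(_ X setT (fun c => (ball c (r n))°)).
  case.
  - by move=> c _; exact: open_interior.
  - by move=> x _; exists x => //; exact: nbhsx_ballx.
  - by move=> D' _ h; exists D'.
have [D hDn] := choice hD.
pose G n i : X -> R := if (i < size (enum_fset (D n)))%N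
  then gf (nth point (enum_fset (D n)) i) (r n) else fun=> 1.
pose g k := if (choice.unpickle k : option (nat * nat)) is Some (n, i) then G n i else fun=> 1.
exists g; split.
- move=> k; rewrite /g; case: choice.unpickle => [[n i]|]; last by move=> x; exact: cvg_cst.
  rewrite /G; case: ifP => _; [exact: gf_cont | by move=> x; exact: cvg_cst].
- move=> k x; rewrite /g; case: choice.unpickle => [[n i]|]; last by rewrite ler01 lexx.
  rewrite /G; case: ifP => _; [exact: gf_range | by rewrite ler01 lexx].
- move=> k; rewrite /g; case: choice.unpickle => [[n i]|]; last by exists point.
  rewrite /G; case: ifP => _; last by exists point.
  by exists (nth point (enum_fset (D n)) i); exact: gf_c.
- move=> U oU [x Ux].
  have : nbhs x U by rewrite openE in oU; exact: oU.
  case/nbhs_ballP => e e0 exU.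
  have e20 : 0 < e / 2 by rewrite divr_gt0.
  case: (near_infty_natSinv_lt (PosNum e20)) => N _ HN.
  have rN : r N < e / 2 by exact: (HN N (leqnn N)).
  have [c Dc cx] := hDn N x I.
  exists (choice.pickle (N, index c (enum_fset (D N)))).
  rewrite /g choice.pickleK /G index_mem.
  have Dc' : c \in enum_fset (D N) by exact: Dc.
  rewrite Dc' nth_index // => y nUy; apply: gf_out => // bcy; apply: nUy; apply: exU.
  apply: (@le_ball _ _ _ (r N + r N)).
    by rewrite [e](splitr e) lerD // ltW.
  apply: ball_triangle bcy; apply: ball_sym; exact: interior_subset cx.
Qed.
End pib.

Section mainsec.
Context {R : realType} {X : pseudoPMetricType R}.
Local Notation T := (BorelOf X).

Lemma open_mT (U : set X) : open U -> measurable (U : set T).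
Proof. by move=> oU; apply: sub_sigma_algebra. Qed.

Lemma cont_mfun (f : X -> R) : continuous f -> measurable_fun [set: T] f.
Proof.
move=> /continuousP cf; apply: (measurability _ (measurable_realfun.RGenOpens.measurableE R)).
move=> _ [_ [a [b ->] <-]]; rewrite setTI; apply: open_mT; apply: cf.
exact: interval_open.
Qed.

Lemma cont_mfunE (f : X -> R) : continuous f -> measurable_fun [set: T] (EFin \o f).
Proof. by move=> cf; apply/measurable_EFinP; exact: cont_mfun. Qed.

Local Open Scope ereal_scope.

Lemma g_int_pos (mu : probability T R) (g : X -> R) (x0 : X) :
  continuous g -> (forall x, (0 <= g x)%R) -> g x0 = 1%R -> full_support mu ->
  0 < \int[mu]_x (g x)%:E.
Proof.
move=> cg g0 gx0 fs.
pose O : set X := g @^-1` `]2^-1%R, +oo[%classic.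
have oO : open O by apply: (proj1 (continuousP g) cg); exact: interval_open.
have mO : measurable (O : set T) by exact: open_mT.
have O0 : 0 < mu O.
  apply: fs => //; exists x0; rewrite /O /= in_itv /= gx0 andbT invf_lt1 //.
  by rewrite ltr1n.
have mg := cont_mfunE g cg.
apply: (@lt_le_trans _ _ (\int[mu]_(x in (O : set T)) (g x)%:E)); last first.
  apply: ge0_subset_integral => //= x _; rewrite lee_fin; exact: g0.
apply: (@lt_le_trans _ _ (\int[mu]_(x in (O : set T)) (cst (2^-1)%R%:E) x)).
  have := integral_cst mu mO (2^-1)%R%:E; rewrite /= => ->.
  by rewrite mule_gt0 // lte_fin invr_gt0.
apply: ge0_le_integral => //.
- by move=> x _; rewrite lee_fin invr_ge0.
- by apply: (measurable_funS measurableT) => //; exact: mg.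
- by move=> x; rewrite /O /= in_itv /= andbT lee_fin => /ltW.
Qed.

Lemma g_int_U (mu : probability T R) (g : X -> R) (U : set X) :
  continuous g -> (forall x, (0 <= g x <= 1)%R) -> open U ->
  (forall x, ~ U x -> g x = 0%R) -> 0 < \int[mu]_x (g x)%:E -> 0 < mu U.
Proof.
move=> cg g01 oU gU h; apply: (lt_le_trans h).
have mU := open_mT U oU.
rewrite -[X in _ <= mu X](setIT U) -integral_indic //.
apply: ge0_le_integral => //.
- by move=> x _; rewrite lee_fin; have /andP[] := g01 x.
- exact: cont_mfunE g cg.
- by apply/measurable_EFinP; exact: measurable_indic.
- move=> x _; rewrite lee_fin indicE; have [Ux|nUx] := boolP (x \in (U : set T)).
    by have /andP[] := g01 x.
  by rewrite gU // => Ux; move/negP: nUx; apply; rewrite in_setE.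
Qed.

Lemma exists_full (F : X -> set X) : compact [set: X] ->
  dense [set x | has_periodic_orbit F x] ->
  exists nu : probability T R, invP F nu /\ full_support nu.
Proof.
move=> cX dP.
have [g [gc g01 g1 gU]] := pibase cX.
pose O k : set X := g k @^-1` `]2^-1%R, +oo[%classic.
have oO k : open (O k) by apply: (proj1 (continuousP (g k)) (gc k)); exact: interval_open.
have nO k : O k !=set0.
  have [x gx] := g1 k; exists x; rewrite /O /= in_itv /= gx andbT invf_lt1 //.
  by rewrite ltr1n.
have hp : forall k, exists sp : (nat -> X) * nat, [/\ O k (sp.1 0%N), (0 < sp.2)%N,
    forall j, sp.1 (j + sp.2)%N = sp.1 j & forall j, F (sp.1 j) (sp.1 j.+1)].
  move=> k; have [x [Ox [s [[s0 orb] [p [p0 per]]]]]] := dP (O k) (nO k) (oO k).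
  by exists (s, p); split => //=; rewrite s0.
have [sp hsp] := choice hp.
have p0 k : (0 < (sp k).2)%N by case: (hsp k).
pose mu k : probability T R := pwrap (@cycm_setT R _ T (sp k).1 (sp k).2 (p0 k)).
pose nu : probability T R := pwrap (serm_setT mu).
exists nu; split.
- move=> B C mB mC BC; apply: (@serm_inv R X F mu _ B C) => // k.
  by case: (hsp k) => _ _ per orb; exact: cycm_inv.
- move=> U oU U0; have [k hk] := gU U oU U0.
  apply: (@serm_pos R X mu k); first exact: open_mT.
  apply: cycm_pos; first exact: p0.
  case: (hsp k) => Ok _ _ _; apply: contrapT => nU.
  move: Ok; rewrite /O /= (hk _ nU) in_itv /= andbT => /lt_le_trans/(_ (lexx 0%R)).
  by rewrite ltNge invr_ge0 ler0n.
Qed.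

Lemma cont_bound (f : X -> R) : compact [set: X] -> continuous f ->
  exists M : R, (0 <= M)%R /\ forall x, (`|f x| <= M)%R.
Proof.
move=> cX cf.
have := compact_bounded (continuous_compact (continuous_subspaceT cf) cX).
move=> /pinfty_ex_gt0 [M M0 hM]; exists M; split; first exact: ltW.
by move=> x; apply: hM; exists x.
Qed.
End mainsec.

Lemma arith (R : realType) (M eps a b : R) : 0 <= M -> 0 < eps -> `|a| <= M -> `|b| <= M ->
  `|(1 - eps / (2 * (M + eps))) * a + eps / (2 * (M + eps)) * b - a| < eps.
Proof.
move=> M0 e0 ha hb.
set t := eps / (2 * (M + eps)).
have Me : 0 < 2 * (M + eps) by lra.
have t0 : 0 <= t by rewrite /t divr_ge0 // ltW.
have -> : (1 - t) * a + t * b - a = t * (b - a) by ring.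
rewrite normrM ger0_norm //.
apply: (@le_lt_trans _ _ (t * (2 * M))).
  apply: ler_wpM2l => //; apply: (le_trans (ler_normB _ _)); lra.
rewrite /t mulrAC ltr_pdivrMr // ltr_pM2l //; lra.
Qed.

Theorem theorem14 (R : realType) (X : pseudoPMetricType R)
  (F : X -> set X) :
  hausdorff_space X ->
  compact [set: X] ->
  set_valued_map F ->
  dense [set x | has_periodic_orbit F x] ->
  (exists mu : probability (BorelOf X) R, F_invariant F mu /\ full_support mu) /\
  (weak_dense_in [set mu : probability (BorelOf X) R | F_invariant F mu]
     [set mu | F_invariant F mu /\ full_support mu] /\
   weak_Gdelta_in [set mu : probability (BorelOf X) R | F_invariant F mu]
     [set mu | F_invariant F mu /\ full_support mu]).
Proof.
move=> _ cX _ dP.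
have [nu0 [inv0 fs0]] := exists_full F cX dP.
have [g [gc g01 g1 gU]] := pibase cX.
split; first by exists nu0; split => //; apply/invPE.
split.
- move=> mu /= /invPE invmu W wW Wmu.
  have [n [f [eps [cf [eps0 hW]]]]] := wW mu Wmu.
  have hb i : exists M : R, (0 <= M)%R /\ forall x, (`|f i x| <= M)%R.
    exact: (cont_bound (f i) cX (cf i)).
  have [Mf hMf] := choice hb.
  pose M := (\sum_(i < n) Mf i)%R.
  have M0 : (0 <= M)%R by apply: sumr_ge0 => j _; exact: (proj1 (hMf j)).
  have hM i x : (i < n)%N -> (`|f i x| <= M)%R.
    move=> hi; apply: (le_trans (proj2 (hMf i) x)).
    rewrite /M (bigD1 (Ordinal hi)) //= lerDl sumr_ge0 // => j _.
    exact: (proj1 (hMf j)).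
  pose t := (eps / (2 * (M + eps)))%R.
  have Me : (0 < 2 * (M + eps))%R by lra.
  have t0' : (0 < t)%R by rewrite /t divr_gt0.
  have t1' : (t <= 1)%R by rewrite /t ler_pdivrMr // mul1r; lra.
  have t0 : (0 <= t)%R by exact: ltW.
  have t1 : (0 <= 1 - t)%R by rewrite subr_ge0.
  pose nu : probability (BorelOf X) R := pwrap (@mixm_setT R _ _ t t0 t1 mu nu0).
  exists nu; split; first split.
  + apply/invPE => B C mB mC BC.
    exact: (@mixm_inv R X F t t0 t1 mu nu0 invmu inv0 B C mB mC BC).
  + move=> U oU U0.
    have e : nu U = ((1 - t)%:E * mu U + t%:E * nu0 U)%E := @mixmE R _ _ t t0 t1 mu nu0 U.
    rewrite e.
    apply: (@lt_le_trans _ _ (t%:E * nu0 U)%E).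
      by rewrite mule_gt0 //; exact: fs0.
    by rewrite leeDr // mule_ge0 // lee_fin.
  + apply: hW => i hi.
    have mf := cont_mfun _ (cf i).
    have hMi x := hM i x hi.
    have [a [ha aM]] := @prob_int_bound _ _ _ mu (f i) M mf hMi.
    have [b [hb' bM]] := @prob_int_bound _ _ _ nu0 (f i) M mf hMi.
    have fin1 (m : probability (BorelOf X) R) : m.-integrable setT (EFin \o f i).
      apply: (@bounded_int _ _ _ m (f i) M) => //.
      by apply: (le_lt_trans (probability_le1 m measurableT)); exact: ltry.
    have fin2 (m : probability (BorelOf X) R) (k : {nonneg R}) :
        (mscale k m).-integrable setT (EFin \o f i).
      apply: (@bounded_int _ _ _ (mscale k m) (f i) M) => //.
      change (k%:num%:E * m setT < +oo)%E.
      apply: (@le_lt_trans _ _ (k%:num%:E * 1)%E); last by rewrite mule1 ltry.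
      by apply: lee_wpmul2l; [rewrite lee_fin | exact: probability_le1].
    have hnu : (\int[nu]_x (f i x)%:E = ((1 - t) * a + t * b)%:E)%E.
      rewrite (eq_measure_integral (measure_add (mscale (NngNum t1) mu) (mscale (NngNum t0) nu0))) //.
      rewrite integral_measure_add //.
      rewrite !integral_mscaleS //=. all: try (by exact: fin1). all: try (by exact: fin2).
      by rewrite ha hb' -!EFinM -EFinD.
    rewrite hnu ha -EFinB abse_EFin lte_fin.
    exact: arith.
- pose Ws k : set (probability (BorelOf X) R) :=
    [set m : probability (BorelOf X) R | (0 < \int[m]_x (g k x)%:E)%E].
  exists Ws; split.
  + move=> k m hm.
    have gb x : (`|g k x| <= 1)%R.
      by have /andP[ga gb] := g01 k x; rewrite ger0_norm.
    have [a [ha a1]] := @prob_int_bound _ _ _ m (g k) 1%R (cont_mfun _ (gc k)) gb.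
    have a0 : (0 < a)%R by move: hm; rewrite /Ws /= ha lte_fin.
    exists 1%N, (fun _ => g k), a; split; first by move=> _; exact: gc k.
    split => // nu hnu; have := hnu 0%N isT.
    have [b [hb _]] := @prob_int_bound _ _ _ nu (g k) 1%R (cont_mfun _ (gc k)) gb.
    rewrite hb ha /Ws /= hb !lte_fin ltr_norml => /andP[h _].
    by move: h; rewrite ltrBrDr addNr.
  + apply/seteqP; split => m /=.
    * move=> [im fs]; split => // k _; rewrite /Ws /=.
      have [x gx] := g1 k.
      apply: (@g_int_pos R X m (g k) x (gc k)) => //; first by move=> y; have /andP[] := g01 k y.
    * move=> [im hall]; split => // U oU U0.
      have [k hk] := gU U oU U0.
      exact: (@g_int_U R X m (g k) U (gc k) (g01 k) oU hk (hall k I)).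
Qed.
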